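(* $\mathsf{GKur}=\mathsf{MS4}+\Box\forall\Diamond\Box p\to\Diamond\Box\forall p=\mathsf{MS4}+\Box\neg\Box\forall\neg p\to\neg\Box\forall\neg\Box\Diamond p$.
   Context: $\mathsf{MIPC}$ is the smallest set of formulas in the bimodal language $\mathcal{L}_{\forall\exists}$ containing all theorems of $\mathsf{IPC}$; $\forall(p\wedge q)\leftrightarrow(\forall p\wedge\forall q)$, $\forall p\to p$, $\forall p\to\forall\forall p$; $\exists(p\vee q)\leftrightarrow(\exists p\vee\exists q)$, $p\to\exists p$, $\exists\exists p\to\exists p$, $(\exists p\wedge\exists q)\to\exists(\exists p\wedge q)$; $\exists\forall p\to\forall p$, $\exists p\to\forall\exists p$; closed under modus ponens, substitution and $\varphi/\forall\varphi$. $\mathsf{Kur}=\mathsf{MIPC}+\forall\neg\neg p\to\neg\neg\forall p$. $\mathsf{MS4}$ is the smallest set of formulas in the classical bimodal language $\mathcal{L}_{\Box\forall}$ containing all classical tautologies, the $\mathsf{S4}$ axioms for $\Box$, the $\mathsf{S5}$ axioms for $\forall$, and $\Box\forall p\to\forall\Box p$, closed under modus ponens, substitution, $\Box$- and $\forall$-necessitation; $\Diamond=\neg\Box\neg$, $\exists=\neg\forall\neg$. $\mathsf{GKur}=\mathsf{MS4}+\{\varphi^t:\mathsf{Kur}\vdash\varphi\}$, with Gödel translation $\bot^t=\bot$, $p^t=\Box p$, $(\varphi\wedge\psi)^t=\varphi^t\wedge\psi^t$, $(\varphi\vee\psi)^t=\varphi^t\vee\psi^t$, $(\varphi\to\psi)^t=\Box(\neg\varphi^t\vee\psi^t)$,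 $(\forall\varphi)^t=\Box\forall\varphi^t$, $(\exists\varphi)^t=\exists\varphi^t$. *)

(* Defs.v *)
From Stdlib Require Import Arith.
Set Implicit Arguments.

Inductive ifm : Type :=
| IVar : nat -> ifm
| IBot : ifm
| IAnd : ifm -> ifm -> ifm
| IOr  : ifm -> ifm -> ifm
| IImp : ifm -> ifm -> ifm
| IAll : ifm -> ifm
| IEx  : ifm -> ifm.

Definition INeg (a : ifm) : ifm := IImp a IBot.
Definition IIff (a b : ifm) : ifm := IAnd (IImp a b) (IImp b a).

Fixpoint isubst (s : nat -> ifm) (f : ifm) : ifm :=
  match f with
  | IVar n => s n
  | IBot => IBot
  | IAnd a b => IAnd (isubst s a) (isubst s b)
  | IOr a b => IOr (isubst s a) (isubst s b)
  | IImp a b => IImp (isubst s a) (isubst s b)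
  | IAll a => IAll (isubst s a)
  | IEx a => IEx (isubst s a)
  end.

Inductive IPC : ifm -> Prop :=
| ipc_k a b : IPC (IImp a (IImp b a))
| ipc_s a b c : IPC (IImp (IImp a (IImp b c)) (IImp (IImp a b) (IImp a c)))
| ipc_and1 a b : IPC (IImp (IAnd a b) a)
| ipc_and2 a b : IPC (IImp (IAnd a b) b)
| ipc_andI a b : IPC (IImp a (IImp b (IAnd a b)))
| ipc_or1 a b : IPC (IImp a (IOr a b))
| ipc_or2 a b : IPC (IImp b (IOr a b))
| ipc_orE a b c : IPC (IImp (IImp a c) (IImp (IImp b c) (IImp (IOr a b) c)))
| ipc_efq a : IPC (IImp IBot a)
| ipc_mp a b : IPC (IImp a b) -> IPC a -> IPC b.

Definition ip : ifm := IVar 0.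
Definition iq : ifm := IVar 1.

Inductive MIPC_axiom : ifm -> Prop :=
| mipc_a1 : MIPC_axiom (IIff (IAll (IAnd ip iq)) (IAnd (IAll ip) (IAll iq)))
| mipc_a2 : MIPC_axiom (IImp (IAll ip) ip)
| mipc_a3 : MIPC_axiom (IImp (IAll ip) (IAll (IAll ip)))
| mipc_e1 : MIPC_axiom (IIff (IEx (IOr ip iq)) (IOr (IEx ip) (IEx iq)))
| mipc_e2 : MIPC_axiom (IImp ip (IEx ip))
| mipc_e3 : MIPC_axiom (IImp (IEx (IEx ip)) (IEx ip))
| mipc_e4 : MIPC_axiom (IImp (IAnd (IEx ip) (IEx iq)) (IEx (IAnd (IEx ip) iq)))
| mipc_m1 : MIPC_axiom (IImp (IEx (IAll ip)) (IAll ip))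
| mipc_m2 : MIPC_axiom (IImp (IEx ip) (IAll (IEx ip))).

Inductive MIPC_ext (G : ifm -> Prop) : ifm -> Prop :=
| mipcx_ipc f : IPC f -> MIPC_ext G f
| mipcx_ax f : MIPC_axiom f -> MIPC_ext G f
| mipcx_extra f : G f -> MIPC_ext G f
| mipcx_mp a b : MIPC_ext G (IImp a b) -> MIPC_ext G a -> MIPC_ext G b
| mipcx_subst s f : MIPC_ext G f -> MIPC_ext G (isubst s f)
| mipcx_nec f : MIPC_ext G f -> MIPC_ext G (IAll f).

Definition MIPC : ifm -> Prop := MIPC_ext (fun _ => False).

Definition kur_axiom : ifm :=
  IImp (IAll (INeg (INeg ip))) (INeg (INeg (IAll ip))).

Definition Kur : ifm -> Prop := MIPC_ext (fun f => f = kur_axiom).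

Inductive cfm : Type :=
| CVar : nat -> cfm
| CBot : cfm
| CAnd : cfm -> cfm -> cfm
| COr  : cfm -> cfm -> cfm
| CImp : cfm -> cfm -> cfm
| CBox : cfm -> cfm
| CAll : cfm -> cfm.

Definition CNeg (a : cfm) : cfm := CImp a CBot.
Definition CDia (a : cfm) : cfm := CNeg (CBox (CNeg a)).
Definition CEx (a : cfm) : cfm := CNeg (CAll (CNeg a)).

Fixpoint csubst (s : nat -> cfm) (f : cfm) : cfm :=
  match f with
  | CVar n => s n
  | CBot => CBot
  | CAnd a b => CAnd (csubst s a) (csubst s b)
  | COr a b => COr (csubst s a) (csubst s b)
  | CImp a b => CImp (csubst s a) (csubst s b)
  | CBox a => CBox (csubst s a)
  | CAll a => CAll (csubst s a)
  end.

(* Classical tautologies: formulas true under every Boolean valuation in which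
   variables and modalized formulas (Box a, forall a) are treated as atoms. *)
Fixpoint ceval (v : cfm -> bool) (f : cfm) : bool :=
  match f with
  | CVar n => v (CVar n)
  | CBot => false
  | CAnd a b => ceval v a && ceval v b
  | COr a b => ceval v a || ceval v b
  | CImp a b => negb (ceval v a) || ceval v b
  | CBox a => v (CBox a)
  | CAll a => v (CAll a)
  end.

Definition tautology (f : cfm) : Prop := forall v, ceval v f = true.

Definition cp : cfm := CVar 0.
Definition cq : cfm := CVar 1.

Inductive MS4_axiom : cfm -> Prop :=
| ms4_boxK : MS4_axiom (CImp (CBox (CImp cp cq)) (CImp (CBox cp) (CBox cq)))
| ms4_boxT : MS4_axiom (CImp (CBox cp) cp)
| ms4_box4 : MS4_axiom (CImp (CBox cp) (CBox (CBox cp)))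
| ms4_allK : MS4_axiom (CImp (CAll (CImp cp cq)) (CImp (CAll cp) (CAll cq)))
| ms4_allT : MS4_axiom (CImp (CAll cp) cp)
| ms4_all4 : MS4_axiom (CImp (CAll cp) (CAll (CAll cp)))
| ms4_all5 : MS4_axiom (CImp (CEx cp) (CAll (CEx cp)))
| ms4_mix  : MS4_axiom (CImp (CBox (CAll cp)) (CAll (CBox cp))).

Inductive MS4_ext (G : cfm -> Prop) : cfm -> Prop :=
| ms4x_taut f : tautology f -> MS4_ext G f
| ms4x_ax f : MS4_axiom f -> MS4_ext G f
| ms4x_extra f : G f -> MS4_ext G f
| ms4x_mp a b : MS4_ext G (CImp a b) -> MS4_ext G a -> MS4_ext G b
| ms4x_subst s f : MS4_ext G f -> MS4_ext G (csubst s f)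
| ms4x_nbox f : MS4_ext G f -> MS4_ext G (CBox f)
| ms4x_nall f : MS4_ext G f -> MS4_ext G (CAll f).

Definition MS4 : cfm -> Prop := MS4_ext (fun _ => False).

Fixpoint gtr (f : ifm) : cfm :=
  match f with
  | IBot => CBot
  | IVar n => CBox (CVar n)
  | IAnd a b => CAnd (gtr a) (gtr b)
  | IOr a b => COr (gtr a) (gtr b)
  | IImp a b => CBox (COr (CNeg (gtr a)) (gtr b))
  | IAll a => CBox (CAll (gtr a))
  | IEx a => CEx (gtr a)
  end.

Definition GKur : cfm -> Prop :=
  MS4_ext (fun f => exists g, Kur g /\ f = gtr g).

Definition gkur_ax1 : cfm :=
  CImp (CBox (CAll (CDia (CBox cp)))) (CDia (CBox (CAll cp))).

Definition gkur_ax2 : cfm :=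
  CImp (CBox (CNeg (CBox (CAll (CNeg cp)))))
       (CNeg (CBox (CAll (CNeg (CBox (CDia cp)))))).

(* Main.v *)
Require Import Defs.
From Stdlib Require Import Bool.

Ltac taut_solve :=
  let v := fresh "v" in
  repeat match goal with x := _ |- _ => subst x end;
  intro v; unfold gkur_ax1, gkur_ax2, CDia, CEx, CNeg, cp, cq, ip, iq in *; simpl;
  unfold CDia, CEx, CNeg, cp, cq in *; simpl;
  repeat match goal with
  | |- context [ceval v ?a] => destruct (ceval v a)
  | |- context [v ?a] => destruct (v a)
  end; reflexivity.


Lemma mp {G a b} : MS4_ext G (CImp a b) -> MS4_ext G a -> MS4_ext G b.
Proof. exact (@ms4x_mp G a b). Qed.
Lemma t0 {G a} : tautology a -> MS4_ext G a.
Proof. exact (@ms4x_taut G a). Qed.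
Lemma t1 {G a b} : tautology (CImp a b) -> MS4_ext G a -> MS4_ext G b.
Proof. intros T H. exact (mp (t0 T) H). Qed.
Lemma t2 {G a b c} : tautology (CImp a (CImp b c)) -> MS4_ext G a -> MS4_ext G b -> MS4_ext G c.
Proof. intros T H1 H2. exact (mp (mp (t0 T) H1) H2). Qed.
Lemma t3 {G a b c d} : tautology (CImp a (CImp b (CImp c d))) ->
  MS4_ext G a -> MS4_ext G b -> MS4_ext G c -> MS4_ext G d.
Proof. intros T H1 H2 H3. exact (mp (mp (mp (t0 T) H1) H2) H3). Qed.
Lemma t4 {G a b c d e} : tautology (CImp a (CImp b (CImp c (CImp d e)))) ->
  MS4_ext G a -> MS4_ext G b -> MS4_ext G c -> MS4_ext G d -> MS4_ext G e.
Proof. intros T H1 H2 H3 H4. exact (mp (mp (mp (mp (t0 T) H1) H2) H3) H4). Qed.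

Ltac p0 := apply t0; taut_solve.
Ltac p1 H := refine (t1 _ H); taut_solve.
Ltac p2 H1 H2 := refine (t2 _ H1 H2); taut_solve.
Ltac p3 H1 H2 H3 := refine (t3 _ H1 H2 H3); taut_solve.
Ltac p4 H1 H2 H3 H4 := refine (t4 _ H1 H2 H3 H4); taut_solve.

Definition s2 (a b : cfm) : nat -> cfm :=
  fun n => match n with 0 => a | 1 => b | _ => CVar n end.
Definition s1 (a : cfm) : nat -> cfm :=
  fun n => match n with 0 => a | _ => CVar n end.

Lemma boxK {G} a b : MS4_ext G (CImp (CBox (CImp a b)) (CImp (CBox a) (CBox b))).
Proof. exact (ms4x_subst (s2 a b) (ms4x_ax G ms4_boxK)). Qed.
Lemma boxT {G} a : MS4_ext G (CImp (CBox a) a).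
Proof. exact (ms4x_subst (s1 a) (ms4x_ax G ms4_boxT)). Qed.
Lemma box4 {G} a : MS4_ext G (CImp (CBox a) (CBox (CBox a))).
Proof. exact (ms4x_subst (s1 a) (ms4x_ax G ms4_box4)). Qed.
Lemma allK {G} a b : MS4_ext G (CImp (CAll (CImp a b)) (CImp (CAll a) (CAll b))).
Proof. exact (ms4x_subst (s2 a b) (ms4x_ax G ms4_allK)). Qed.
Lemma allT {G} a : MS4_ext G (CImp (CAll a) a).
Proof. exact (ms4x_subst (s1 a) (ms4x_ax G ms4_allT)). Qed.
Lemma all4 {G} a : MS4_ext G (CImp (CAll a) (CAll (CAll a))).
Proof. exact (ms4x_subst (s1 a) (ms4x_ax G ms4_all4)). Qed.
Lemma all5 {G} a : MS4_ext G (CImp (CEx a) (CAll (CEx a))).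
Proof. exact (ms4x_subst (s1 a) (ms4x_ax G ms4_all5)). Qed.
Lemma mix {G} a : MS4_ext G (CImp (CBox (CAll a)) (CAll (CBox a))).
Proof. exact (ms4x_subst (s1 a) (ms4x_ax G ms4_mix)). Qed.

Lemma box_mono {G a b} : MS4_ext G (CImp a b) -> MS4_ext G (CImp (CBox a) (CBox b)).
Proof. intro H. exact (mp (boxK a b) (ms4x_nbox H)). Qed.
Lemma all_mono {G a b} : MS4_ext G (CImp a b) -> MS4_ext G (CImp (CAll a) (CAll b)).
Proof. intro H. exact (mp (allK a b) (ms4x_nall H)). Qed.
Lemma imp_trans {G a b c} : MS4_ext G (CImp a b) -> MS4_ext G (CImp b c) -> MS4_ext G (CImp a c).
Proof. intros H1 H2. p2 H1 H2. Qed.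

Lemma box_and {G} a b : MS4_ext G (CImp (CBox a) (CImp (CBox b) (CBox (CAnd a b)))).
Proof.
  assert (h1 : MS4_ext G (CImp a (CImp b (CAnd a b)))) by p0.
  pose proof (box_mono h1) as h2. pose proof (boxK (G:=G) b (CAnd a b)) as h3. p2 h2 h3.
Qed.
Lemma all_and {G} a b : MS4_ext G (CImp (CAll a) (CImp (CAll b) (CAll (CAnd a b)))).
Proof.
  assert (h1 : MS4_ext G (CImp a (CImp b (CAnd a b)))) by p0.
  pose proof (all_mono h1) as h2. pose proof (allK (G:=G) b (CAnd a b)) as h3. p2 h2 h3.
Qed.
Lemma ex_mono {G a b} : MS4_ext G (CImp a b) -> MS4_ext G (CImp (CEx a) (CEx b)).
Proof.
  intro H. assert (h1 : MS4_ext G (CImp (CNeg b) (CNeg a))) by p1 H.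
  pose proof (all_mono h1) as h2. p1 h2.
Qed.
Lemma dia_mono {G a b} : MS4_ext G (CImp a b) -> MS4_ext G (CImp (CDia a) (CDia b)).
Proof.
  intro H. assert (h1 : MS4_ext G (CImp (CNeg b) (CNeg a))) by p1 H.
  pose proof (box_mono h1) as h2. p1 h2.
Qed.
Lemma allT' {G} a : MS4_ext G (CImp a (CEx a)).
Proof. pose proof (allT (G:=G) (CNeg a)) as h. p1 h. Qed.
Lemma B_all {G} a : MS4_ext G (CImp a (CAll (CEx a))).
Proof. exact (imp_trans (allT' a) (all5 a)). Qed.
Lemma S5_1 {G} X : MS4_ext G (CImp (CEx (CAll X)) (CAll X)).
Proof.
  pose proof (all5 (G:=G) (CNeg X)) as h1.
  assert (h2 : MS4_ext G (CImp (CAll X) (CAll (CNeg (CNeg X))))) by (apply all_mono; p0).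
  assert (h3 : MS4_ext G (CImp (CAll (CNeg (CNeg X))) (CAll X))) by (apply all_mono; p0).
  assert (h4 : MS4_ext G (CImp (CAll (CEx (CNeg X))) (CAll (CNeg (CAll X))))).
  { apply all_mono. p1 h2. }
  p3 h1 h3 h4.
Qed.
Lemma exbox {G} s : MS4_ext G (CImp (CEx (CBox s)) (CBox (CEx s))).
Proof.
  pose proof (box_mono (G:=G) (B_all s)) as h1.
  pose proof (mix (G:=G) (CEx s)) as h2.
  pose proof (ex_mono (imp_trans h1 h2)) as h3.
  pose proof (S5_1 (G:=G) (CBox (CEx s))) as h4.
  pose proof (allT (G:=G) (CBox (CEx s))) as h5.
  p3 h3 h4 h5.
Qed.
Lemma boxall_all {G} X : MS4_ext G (CImp (CBox (CAll X)) (CAll (CBox (CAll X)))).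
Proof. exact (imp_trans (box_mono (all4 X)) (mix (CAll X))). Qed.
Lemma boxall_boxed {G} X : MS4_ext G (CImp (CBox (CAll X)) (CBox (CAll (CBox (CAll X))))).
Proof. exact (imp_trans (box4 (CAll X)) (box_mono (boxall_all X))). Qed.
Lemma boxall_inner {G} X : MS4_ext G (CImp (CBox (CAll X)) (CBox (CAll (CBox X)))).
Proof. exact (imp_trans (box4 (CAll X)) (box_mono (mix X))). Qed.

Lemma gbox {G} x : MS4_ext G (CImp (gtr x) (CBox (gtr x))).
Proof.
  induction x; simpl.
  - apply box4.
  - p0.
  - pose proof (box_and (G:=G) (gtr x1) (gtr x2)) as h. p3 IHx1 IHx2 h.
  - assert (h1 : MS4_ext G (CImp (CBox (gtr x1)) (CBox (COr (gtr x1) (gtr x2))))) by (apply box_mono; p0).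
    assert (h2 : MS4_ext G (CImp (CBox (gtr x2)) (CBox (COr (gtr x1) (gtr x2))))) by (apply box_mono; p0).
    p4 IHx1 IHx2 h1 h2.
  - apply box4.
  - apply box4.
  - exact (imp_trans (ex_mono IHx) (exbox _)).
Qed.

Lemma gintro {G Z A B} : MS4_ext G (CImp Z (CBox Z)) -> MS4_ext G (CImp Z (CImp A B)) ->
  MS4_ext G (CImp Z (CBox (COr (CNeg A) B))).
Proof.
  intros Hz H. assert (h1 : MS4_ext G (CImp Z (COr (CNeg A) B))) by p1 H.
  exact (imp_trans Hz (box_mono h1)).
Qed.
Lemma boxed_and {G Z1 Z2} : MS4_ext G (CImp Z1 (CBox Z1)) -> MS4_ext G (CImp Z2 (CBox Z2)) ->
  MS4_ext G (CImp (CAnd Z1 Z2) (CBox (CAnd Z1 Z2))).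
Proof. intros H1 H2. pose proof (box_and (G:=G) Z1 Z2) as h. p3 H1 H2 h. Qed.

Lemma gimp {G} a b : MS4_ext G (CImp (gtr a) (gtr b)) -> MS4_ext G (gtr (IImp a b)).
Proof. intro H. simpl. apply ms4x_nbox. p1 H. Qed.
Lemma gelim {G} a b : MS4_ext G (CImp (gtr (IImp a b)) (CImp (gtr a) (gtr b))).
Proof. simpl. pose proof (boxT (G:=G) (COr (CNeg (gtr a)) (gtr b))) as h. p1 h. Qed.
Lemma gand {G} a b : MS4_ext G (gtr a) -> MS4_ext G (gtr b) -> MS4_ext G (gtr (IAnd a b)).
Proof. intros H1 H2. simpl. p2 H1 H2. Qed.

Lemma ipc_gtr {G} f : IPC f -> MS4_ext G (gtr f).
Proof.
  induction 1.
  - apply gimp. change (MS4_ext G (CImp (gtr a) (CBox (COr (CNeg (gtr b)) (gtr a))))).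
    apply gintro; [apply gbox | p0].
  - apply gimp.
    change (MS4_ext G (CImp (gtr (IImp a (IImp b c)))
      (CBox (COr (CNeg (gtr (IImp a b))) (gtr (IImp a c)))))).
    apply gintro; [apply gbox|].
    assert (h : MS4_ext G (CImp (CAnd (gtr (IImp a (IImp b c))) (gtr (IImp a b))) (gtr (IImp a c)))).
    { change (MS4_ext G (CImp (CAnd (gtr (IImp a (IImp b c))) (gtr (IImp a b)))
         (CBox (COr (CNeg (gtr a)) (gtr c))))).
      apply gintro; [exact (boxed_and (gbox _) (gbox _))|].
      pose proof (gelim (G:=G) a (IImp b c)) as e1.
      pose proof (gelim (G:=G) b c) as e2.
      pose proof (gelim (G:=G) a b) as e3.
      p3 e1 e2 e3. }
    p1 h.
  - apply gimp. p0.
  - apply gimp. p0.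
  - apply gimp. change (MS4_ext G (CImp (gtr a) (CBox (COr (CNeg (gtr b)) (gtr (IAnd a b)))))).
    apply gintro; [apply gbox | p0].
  - apply gimp. p0.
  - apply gimp. p0.
  - apply gimp.
    change (MS4_ext G (CImp (gtr (IImp a c))
      (CBox (COr (CNeg (gtr (IImp b c))) (gtr (IImp (IOr a b) c)))))).
    apply gintro; [apply gbox|].
    assert (h : MS4_ext G (CImp (CAnd (gtr (IImp a c)) (gtr (IImp b c))) (gtr (IImp (IOr a b) c)))).
    { change (MS4_ext G (CImp (CAnd (gtr (IImp a c)) (gtr (IImp b c)))
         (CBox (COr (CNeg (gtr (IOr a b))) (gtr c))))).
      apply gintro; [exact (boxed_and (gbox _) (gbox _))|].
      pose proof (gelim (G:=G) a c) as e1.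
      pose proof (gelim (G:=G) b c) as e2.
      p2 e1 e2. }
    p1 h.
  - apply gimp. p0.
  - exact (mp (mp (gelim a b) IHIPC1) IHIPC2).
Qed.

Lemma mipc_gtr {G} f : MIPC_axiom f -> MS4_ext G (gtr f).
Proof.
  set (P := CBox (CVar 0)). set (Q := CBox (CVar 1)).
  destruct 1; unfold IIff.
  - apply gand; apply gimp; simpl; fold P; fold Q.
    + assert (h1 : MS4_ext G (CImp (CBox (CAll (CAnd P Q))) (CBox (CAll P))))
        by (apply box_mono, all_mono; p0).
      assert (h2 : MS4_ext G (CImp (CBox (CAll (CAnd P Q))) (CBox (CAll Q))))
        by (apply box_mono, all_mono; p0).
      p2 h1 h2.
    + pose proof (all_and (G:=G) P Q) as h1.
      assert (h1' : MS4_ext G (CImp (CAnd (CAll P) (CAll Q)) (CAll (CAnd P Q)))) by p1 h1.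
      pose proof (box_mono h1') as h2.
      pose proof (box_and (G:=G) (CAll P) (CAll Q)) as h3.
      p2 h2 h3.
  - apply gimp; simpl; fold P. exact (imp_trans (boxT _) (allT _)).
  - apply gimp; simpl; fold P. apply boxall_boxed.
  - apply gand; apply gimp; simpl; fold P; fold Q.
    + pose proof (all_and (G:=G) (CNeg P) (CNeg Q)) as h1.
      assert (h2 : MS4_ext G (CImp (CAll (CAnd (CNeg P) (CNeg Q))) (CAll (CNeg (COr P Q)))))
        by (apply all_mono; p0).
      p2 h1 h2.
    + assert (h1 : MS4_ext G (CImp (CEx P) (CEx (COr P Q)))) by (apply ex_mono; p0).
      assert (h2 : MS4_ext G (CImp (CEx Q) (CEx (COr P Q)))) by (apply ex_mono; p0).
      p2 h1 h2.
  - apply gimp; simpl; fold P. apply allT'.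
  - apply gimp; simpl; fold P.
    pose proof (all4 (G:=G) (CNeg P)) as h1.
    assert (h2 : MS4_ext G (CImp (CAll (CAll (CNeg P))) (CAll (CNeg (CNeg (CAll (CNeg P)))))))
      by (apply all_mono; p0).
    p2 h1 h2.
  - apply gimp; simpl; fold P; fold Q.
    pose proof (all5 (G:=G) P) as h1.
    pose proof (all_and (G:=G) (CEx P) (CNeg (CAnd (CEx P) Q))) as h2.
    assert (h3 : MS4_ext G (CImp (CAll (CAnd (CEx P) (CNeg (CAnd (CEx P) Q)))) (CAll (CNeg Q))))
      by (apply all_mono; p0).
    p3 h1 h2 h3.
  - apply gimp; simpl; fold P.
    pose proof (ex_mono (boxall_all (G:=G) P)) as h1.
    pose proof (S5_1 (G:=G) (CBox (CAll P))) as h2.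
    pose proof (allT (G:=G) (CBox (CAll P))) as h3.
    p3 h1 h2 h3.
  - apply gimp; simpl; fold P.
    pose proof (ex_mono (box4 (G:=G) (CVar 0))) as h1.
    pose proof (exbox (G:=G) P) as h2.
    pose proof (box_mono (all5 (G:=G) P)) as h3.
    p3 h1 h2 h3.
Qed.

Lemma gsubst {G} s f :
  MS4_ext G (CImp (gtr (isubst s f)) (csubst (fun n => gtr (s n)) (gtr f))) /\
  MS4_ext G (CImp (csubst (fun n => gtr (s n)) (gtr f)) (gtr (isubst s f))).
Proof.
  induction f; simpl.
  - split; [apply gbox | apply boxT].
  - split; p0.
  - destruct IHf1 as [a1 a2], IHf2 as [b1 b2]. split; [p2 a1 b1 | p2 a2 b2].
  - destruct IHf1 as [a1 a2], IHf2 as [b1 b2]. split; [p2 a1 b1 | p2 a2 b2].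
  - destruct IHf1 as [a1 a2], IHf2 as [b1 b2]. split; apply box_mono; [p2 a2 b1 | p2 a1 b2].
  - destruct IHf as [a1 a2]. split; apply box_mono, all_mono; assumption.
  - destruct IHf as [a1 a2]. split; apply ex_mono; assumption.
Qed.

Lemma kur_gtr {G} : MS4_ext G (gtr kur_axiom) -> forall g, Kur g -> MS4_ext G (gtr g).
Proof.
  intros Hk g H. induction H.
  - apply ipc_gtr; assumption.
  - apply mipc_gtr; assumption.
  - subst f. exact Hk.
  - exact (mp (mp (gelim a b) IHMIPC_ext1) IHMIPC_ext2).
  - exact (mp (proj2 (gsubst s f)) (ms4x_subst (fun n => gtr (s n)) IHMIPC_ext)).
  - simpl. exact (ms4x_nbox (ms4x_nall IHMIPC_ext)).
Qed.

Notation NB A := (CBox (COr (CNeg A) CBot)).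

Lemma NN1 {G} A : MS4_ext G (CImp (NB (NB A)) (CBox (CDia A))).
Proof.
  assert (h : MS4_ext G (CImp (CBox (CNeg A)) (NB A))) by (apply box_mono; p0).
  apply box_mono. p1 h.
Qed.
Lemma NN2 {G} A : MS4_ext G (CImp (CBox (CDia A)) (NB (NB A))).
Proof.
  assert (h : MS4_ext G (CImp (NB A) (CBox (CNeg A)))) by (apply box_mono; p0).
  apply box_mono. p1 h.
Qed.

Lemma kur_from_ax1 {G} : MS4_ext G gkur_ax1 -> MS4_ext G (gtr kur_axiom).
Proof.
  intro ax. set (P := CBox (CVar 0)).
  set (H := CBox (CAll (NB (NB P)))).
  change (MS4_ext G (CBox (COr (CNeg H) (NB (NB (CBox (CAll P))))))).
  pose proof (box_mono (all_mono (NN1 (G:=G) P))) as h1.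
  pose proof (box_mono (all_mono (boxT (G:=G) (CDia P)))) as h2.
  pose proof (dia_mono (boxall_inner (G:=G) cp)) as h4.
  assert (h5 : MS4_ext G (CImp H (CDia (CBox (CAll P))))) by p4 h1 h2 ax h4.
  pose proof (box4 (G:=G) (CAll (NB (NB P)))) as h6.
  pose proof (imp_trans h6 (box_mono h5)) as h7.
  pose proof (NN2 (G:=G) (CBox (CAll P))) as h8.
  apply ms4x_nbox. p2 h7 h8.
Qed.

Lemma ax1_from_kur {G} : MS4_ext G (gtr kur_axiom) -> MS4_ext G gkur_ax1.
Proof.
  intro K. set (P := CBox (CVar 0)).
  set (H := CBox (CAll (NB (NB P)))).
  change (MS4_ext G (CBox (COr (CNeg H) (NB (NB (CBox (CAll P))))))) in K.
  pose proof (mp (boxT _) K) as k.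
  pose proof (boxall_inner (G:=G) (CDia P)) as g1.
  pose proof (box_mono (all_mono (NN2 (G:=G) P))) as g2.
  pose proof (NN1 (G:=G) (CBox (CAll P))) as g3.
  pose proof (boxT (G:=G) (CDia (CBox (CAll P)))) as g4.
  pose proof (dia_mono (box_mono (all_mono (boxT (G:=G) cp)))) as g5.
  assert (k' : MS4_ext G (CImp H (NB (NB (CBox (CAll P)))))) by p1 k.
  pose proof (imp_trans g1 (imp_trans g2 (imp_trans k' (imp_trans g3 (imp_trans g4 g5))))) as r.
  exact r.
Qed.

Lemma ax2_from_ax1 {G} : MS4_ext G gkur_ax1 -> MS4_ext G gkur_ax2.
Proof. intro H. pose proof (ms4x_subst (s1 (CNeg cp)) H) as a. p1 a. Qed.

Lemma ax1_from_ax2 {G} : MS4_ext G gkur_ax2 -> MS4_ext G gkur_ax1.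
Proof.
  intro H. pose proof (ms4x_subst (s1 (CNeg cp)) H) as b.
  assert (c1 : MS4_ext G (CImp (CBox (CAll (CNeg (CNeg cp)))) (CBox (CAll cp))))
    by (apply box_mono, all_mono; p0).
  assert (c2 : MS4_ext G (CImp (CBox (CNeg (CBox (CAll cp)))) (CBox (CNeg (CBox (CAll (CNeg (CNeg cp))))))))
    by (apply box_mono; p1 c1).
  assert (c3 : MS4_ext G (CImp (CBox cp) (CBox (CNeg (CNeg cp))))) by (apply box_mono; p0).
  assert (c4 : MS4_ext G (CImp (CBox (CNeg (CBox (CNeg (CNeg cp))))) (CBox (CNeg (CBox cp)))))
    by (apply box_mono; p1 c3).
  assert (c5 : MS4_ext G (CImp (CDia (CBox cp)) (CNeg (CBox (CDia (CNeg cp)))))) by p1 c4.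
  pose proof (box_mono (all_mono c5)) as c6.
  p3 b c2 c6.
Qed.

Lemma incl G1 G2 : (forall g, G1 g -> MS4_ext G2 g) -> forall f, MS4_ext G1 f -> MS4_ext G2 f.
Proof.
  intros HG f H. induction H.
  - apply ms4x_taut; assumption.
  - apply ms4x_ax; assumption.
  - apply HG; assumption.
  - exact (mp IHMS4_ext1 IHMS4_ext2).
  - apply ms4x_subst; assumption.
  - apply ms4x_nbox; assumption.
  - apply ms4x_nall; assumption.
Qed.

Theorem proposition3p18 :
  (forall f : cfm, GKur f <-> MS4_ext (fun g => g = gkur_ax1) f) /\
  (forall f : cfm, GKur f <-> MS4_ext (fun g => g = gkur_ax2) f).
Proof.
  assert (A : forall f, GKur f -> MS4_ext (fun g => g = gkur_ax1) f).
  { apply incl. intros g [h [Hh ->]]. exact (@kur_gtr (fun g => g = gkur_ax1)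
      (kur_from_ax1 (ms4x_extra (fun g => g = gkur_ax1) gkur_ax1 eq_refl)) h Hh). }
  assert (B : forall f, MS4_ext (fun g => g = gkur_ax1) f -> GKur f).
  { apply incl. intros g ->. apply ax1_from_kur. apply ms4x_extra.
    exists kur_axiom. split; [apply mipcx_extra; reflexivity | reflexivity]. }
  assert (C : forall f, MS4_ext (fun g => g = gkur_ax1) f -> MS4_ext (fun g => g = gkur_ax2) f).
  { apply incl. intros g ->. apply ax1_from_ax2. apply ms4x_extra. reflexivity. }
  assert (D : forall f, MS4_ext (fun g => g = gkur_ax2) f -> MS4_ext (fun g => g = gkur_ax1) f).
  { apply incl. intros g ->. apply ax2_from_ax1. apply ms4x_extra. reflexivity. }
  split; intro f; split; auto.
Qed.
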